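(* In the setting described in the context, assume $G$ satisfies Condition 1, and let $U=\max_{i}x_i(0)$ and $u=\min_i x_i(0)$, the max and min over non-faulty agents. Then for every non-faulty agent $i$ and every $t\ge1$, $$|y(t)-x_i(t)|\le(n-\phi)\max\{|u|,|U|\}\gamma^{\lceil t/\nu\rceil}+(n-\phi)L\sum_{r=1}^{t-1}\alpha(r-1)\gamma^{\lceil (t-r)/\nu\rceil}+2\alpha(t-1)L,$$ where the sum is $0$ when $t=1$.
   Context: A synchronous system of $n$ agents communicates over a directed graph $G=(\mathcal{V},\mathcal{E})$, $\mathcal{V}=\{1,\dots,n\}$, without self-loops; $N_i^-=\{j:(j,i)\in\mathcal{E}\}$. At most $f$ agents are Byzantine faulty (may send arbitrary, possibly inconsistent values); $\mathcal{F}$ is the set of faulty agents, $\phi=|\mathcal{F}|\le f$, non-faulty agents indexed $1,\dots,n-\phi$. Assignment matrix $\mathbf{A}\in\mathbb{R}^{k\times n}$: nonnegative entries, columns summing to $1$; agent $i$ holds $g_i=\sum_{j=1}^k\mathbf{A}_{ji}h_j$ for admissible (convex, $L$-Lipschitz, nonempty compact argmin) $h_1,\dots,h_k:\mathbb{R}\to\mathbb{R}$. Sparsity parameter $sp(\mathbf{A})$: smallest $s$ such that the sum of any $s$ columns of $\mathbf{A}$ is component-wise positive ($n+1$ if the sum of all columns is not). Reduced graph w.r.t. $\mathcal{F}$: subgraph of $G$ obtained by removing the nodes of $\mathcal{F}$ with their edges and then up to $f$ additional incoming edges at each remaining node; $R_{\mathcal{F}}$ the set of reduced graphs, $\tau=|R_{\mathcal{F}}|$.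 Source component: set of nodes each having a directed path to every other node of the graph. Condition 1: for every $\mathcal{F}'\subseteq\mathcal{V}$ with $|\mathcal{F}'|\le f$, every reduced graph w.r.t. $\mathcal{F}'$ has a source component with at least $\max\{f+1,sp(\mathbf{A})\}$ nodes. Step sizes: $\alpha(t)\ge0$ with $\alpha(t+1)\le\alpha(t)$, $\sum_t\alpha(t)=\infty$, $\sum_t\alpha^2(t)<\infty$. Algorithm 2: arbitrary $x_i(0)$; in iteration $t\ge1$ non-faulty agent $i$ sends $x_i(t-1)$ to all out-neighbors, receives $|N_i^-|$ values (default for missing), discards the $f$ smallest and $f$ largest, lets $N_i^*(t)$ be the senders of the remaining values with values $w_j$, sets $w_i=x_i(t-1)$, and updates $x_i(t)=\frac{1}{|N_i^*(t)|+1}\sum_{j\in\{i\}\cup N_i^*(t)}w_j-\alpha(t-1)d_i(t-1)$, $d_i(t-1)$ a subgradient of $g_i$ at $x_i(t-1)$. Known facts: with $\mathbf{x}(t)$ the non-faulty states and $\mathbf{d}(t)=(d_1(t),\dots,d_{n-\phi}(t))$, $\mathbf{x}(t+1)=\mathbf{M}(t)\mathbf{x}(t)-\alpha(t)\mathbf{d}(t)$ with row-stochastic $\mathbf{M}(t)$, and there is $0<\beta<1$ with $\mathbf{M}(t)\ge\beta\mathbf{H}(t)$ entrywise for the adjacency matrix $\mathbf{H}(t)$ (including diagonal ones) of some reduced graph in $R_{\mathcal{F}}$. Let $\Phi(t,r)=\mathbf{M}(t)\cdots\mathbf{M}(r)$ for $t\ge r$, $\Phi(t,t+1)=I$, $\nu=\tau(n-\phi)$,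 $\gamma=1-\beta^\nu$. Under Condition 1, for each $r$, $\lim_{t\to\infty}\Phi(t,r)=\mathbf{1}\pi(r)$ for a stochastic row vector $\pi(r)$, and $|\Phi_{ij}(t,r)-\pi_j(r)|\le\gamma^{\lceil (t-r+1)/\nu\rceil}$ for all $t\ge r$. Define $y(t)=\sum_{j=1}^{n-\phi}\pi_j(0)x_j(0)-\sum_{r=1}^{t}\alpha(r-1)\sum_{j=1}^{n-\phi}\pi_j(r)d_j(r-1)$. *)

(* Defs.v *)
From HB Require Import structures.
From mathcomp Require Import all_boot all_order all_algebra.
From mathcomp Require Import all_classical all_reals all_analysis.
Set Implicit Arguments. Unset Strict Implicit. Unset Printing Implicit Defensive.
Import Order.TTheory GRing.Theory Num.Theory.
Import numFieldNormedType.Exports.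
Local Open Scope classical_set_scope.
Local Open Scope ring_scope.

Section Defs.
Variable R : realType.

Definition ceil_div (a b : nat) : nat := ((a + b.-1) %/ b)%N.

Definition admissible (L : R) (h : R -> R) : Prop :=
  (forall (a b lam : R), 0 <= lam -> lam <= 1 ->
      h (lam * a + (1 - lam) * b) <= lam * h a + (1 - lam) * h b) /\
  (forall a b : R, `|h a - h b| <= L * `|a - b|) /\
  ([set x : R | forall y, h x <= h y] !=set0) /\
  compact [set x : R | forall y, h x <= h y].

Definition assignment (k n : nat) (A : 'M[R]_(k, n)) : Prop :=
  (forall j i, 0 <= A j i) /\ (forall i, \sum_j A j i = 1).

Definition gcost (k n : nat) (A : 'M[R]_(k, n)) (h : 'I_k -> R -> R)
  (i : 'I_n) (x : R) : R := \sum_(j < k) A j i * h j x.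

Definition is_subgradient (g : R -> R) (x d : R) : Prop :=
  forall y, g x + d * (y - x) <= g y.

Definition sp_ok (k n : nat) (A : 'M[R]_(k, n)) (s : nat) : bool :=
  [forall S : {set 'I_n}, (#|S| == s) ==> [forall j : 'I_k, 0 < \sum_(i in S) A j i]].

Definition sp (k n : nat) (A : 'M[R]_(k, n)) : nat :=
  \big[minn/n.+1]_(s < n.+1 | sp_ok A s) s.

Definition row_stochastic (m : nat) (M : 'M[R]_m) : Prop :=
  (forall i j, 0 <= M i j) /\ (forall i, \sum_j M i j = 1).

(** [Phi M r k] = M(r+k-1) ... M(r) (k factors); so Phi(t,r) = Phi M r (t-r+1) *)
Fixpoint Phi (m : nat) (M : nat -> 'M[R]_m) (r k : nat) : 'M[R]_m :=
  match k with
  | O => 1%:M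
  | k'.+1 => M (r + k')%N *m Phi M r k'
  end.

Definition is_max_of (m : nat) (v : 'I_m -> R) (U : R) : Prop :=
  (forall i, v i <= U) /\ (exists i, v i = U).
Definition is_min_of (m : nat) (v : 'I_m -> R) (u : R) : Prop :=
  (forall i, u <= v i) /\ (exists i, v i = u).

End Defs.

(** Graphs on V = 'I_n : a relation G (G j i means edge (j,i), j -> i). *)
Section Graphs.
Variable n : nat.

Definition reducedb (G : rel 'I_n) (f : nat) (F : {set 'I_n})
  (E' : {set 'I_n * 'I_n}) : bool :=
  [forall e in E', [&& e.1 \notin F, e.2 \notin F & G e.1 e.2]] &&
  [forall i, (i \notin F) ==>
     (#|[set j | [&& j \notin F, G j i & (j, i) \notin E']]| <= f)%N].

Definition has_source_component (F : {set 'I_n}) (E' : {set 'I_n * 'I_n}) (c : nat) : Prop :=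
  exists S : {set 'I_n}, [/\ S \subset ~: F, (c <= #|S|)%N &
    forall s v, s \in S -> v \notin F -> connect (fun a b => (a, b) \in E') s v].

Definition Condition1 (R : realType) (k : nat) (A : 'M[R]_(k, n)) (G : rel 'I_n) (f : nat) : Prop :=
  forall F' : {set 'I_n}, (#|F'| <= f)%N ->
  forall E' : {set 'I_n * 'I_n}, reducedb G f F' E' ->
  has_source_component F' E' (maxn f.+1 (sp A)).

Definition num_reduced (G : rel 'I_n) (f : nat) (F : {set 'I_n}) : nat :=
  #|[set E' : {set 'I_n * 'I_n} | reducedb G f F E']|.
End Graphs.

(** non-faulty agents are 1..n-phi, i.e. the first n-phi indices *)
Definition nf (n phi : nat) (i : 'I_(n - phi)) : 'I_n := widen_ord (leq_subr phi n) i.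
Definition faulty_set (n phi : nat) : {set 'I_n} := [set i : 'I_n | (n - phi <= i)%N].

(* Main.v *)
Require Import Defs.
From HB Require Import structures.
From mathcomp Require Import all_boot all_order all_algebra.
From mathcomp Require Import all_classical all_reals all_analysis.
Import Order.TTheory GRing.Theory Num.Theory.
Import numFieldNormedType.Exports.
Local Open Scope classical_set_scope.
Local Open Scope ring_scope.
From mathcomp Require Import ring lra.
Lemma d_bound (R : realType) (k n : nat) (A : 'M[R]_(k, n)) (h : 'I_k -> R -> R)
  (L : R) i (x d : R) :
  assignment A -> (forall j, admissible L (h j)) ->
  is_subgradient (gcost A h i) x d -> `|d| <= L.
Proof.
move=> [A0 A1] adm sg.
have lip : forall a b, `|gcost A h i a - gcost A h i b| <= L * `|a - b|.
  move=> a b; rewrite /gcost -sumrB.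
  apply: le_trans (ler_norm_sum _ _ _) _.
  apply: (@le_trans _ _ (\sum_(j < k) A j i * (L * `|a - b|))).
    apply: ler_sum => j _; rewrite -mulrBr normrM ger0_norm //.
    by apply: ler_wpM2l => //; case: (adm j) => _ [] ->.
  by rewrite -mulr_suml A1 mul1r.
have h1 := sg (x + 1); have h2 := sg (x - 1).
have l1 := lip (x + 1) x; have l2 := lip (x - 1) x.
rewrite addrAC subrr add0r normr1 mulr1 in l1.
rewrite addrAC subrr add0r normrN normr1 mulr1 in l2.
rewrite addrAC subrr add0r mulr1 in h1.
rewrite addrAC subrr add0r mulrN1 in h2.
move: l1 l2; rewrite !ler_norml => /andP[_ l1] /andP[_ l2].
apply/andP; split; lra.
Qed.


Lemma swap_sum (R : realType) m (a : 'I_m -> R) (P : 'M[R]_m) (v : 'I_m -> R) :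
  \sum_j a j * \sum_l P j l * v l = \sum_l (\sum_j a j * P j l) * v l.
Proof.
under eq_bigr do rewrite big_distrr.
rewrite exchange_big; apply: eq_bigr => l _; rewrite mulr_suml.
by apply: eq_bigr => j _; rewrite /= mulrA.
Qed.

Lemma id_sum (R : realType) m (i : 'I_m) (v : 'I_m -> R) :
  \sum_j (1%:M : 'M[R]_m) i j * v j = v i.
Proof.
rewrite (bigD1 i) //= mxE eqxx mul1r big1 ?addr0 // => j /negbTE.
by rewrite mxE eq_sym => ->; rewrite mul0r.
Qed.

Lemma unroll (R : realType) m (alpha : nat -> R) (x d : nat -> 'I_m -> R)
  (M : nat -> 'M[R]_m) :
  (forall t i, x t.+1 i = \sum_j M t i j * x t j - alpha t * d t i) ->
  forall t i, x t i = \sum_j Phi M 0 t i j * x 0%N j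
    - \sum_(1 <= r < t.+1) alpha r.-1 * \sum_j Phi M r (t - r) i j * d r.-1 j.
Proof.
move=> rec; elim=> [|t IH] i.
  rewrite big_geq // subr0 id_sum //.
rewrite rec.
under eq_bigr do rewrite IH.
rewrite big_nat_recr //= subnn id_sum.
under [X in _ = _ - (X + _)]eq_big_nat => r /andP[r1 rt].
  rewrite subSn // /= subnKC //; over.
rewrite /= add0n.
under [X in _ = X - _]eq_bigr do rewrite mxE.
rewrite -(@swap_sum _ _ (M t i) (Phi M 0 t)).
under eq_bigr do rewrite mulrBr.
rewrite sumrB.
under [X in _ - X - _ = _]eq_bigr do rewrite big_distrr.
rewrite exchange_big /=.
under [X in _ - X - _ = _]eq_bigr => r _.
  under eq_bigr do rewrite mulrCA.
  rewrite -big_distrr /= swap_sum.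
  over.
rewrite opprD addrA; congr (_ - _ - _); apply: eq_bigr => r _.
by congr (_ * _); apply: eq_bigr => l _; rewrite mxE.
Qed.

Theorem lemma6 (R : realType) (n f phi k : nat) (G : rel 'I_n)
  (A : 'M[R]_(k, n)) (h : 'I_k -> R -> R) (L : R) (alpha : nat -> R)
  (x d : nat -> 'I_(n - phi) -> R) (M : nat -> 'M[R]_(n - phi))
  (pi : nat -> 'I_(n - phi) -> R) (beta U u : R) :
  irreflexive G ->
  (phi <= f)%N -> (phi <= n)%N ->
  assignment A -> (forall j, admissible L (h j)) ->
  Condition1 A G f ->
  (forall t, 0 <= alpha t) -> (forall t, alpha t.+1 <= alpha t) ->
  series alpha @ \oo --> +oo ->
  cvg (series (fun t => alpha t ^+ 2) @ \oo) ->
  (* d_i(t) is a subgradient of g_i at x_i(t) *)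
  (forall t i, is_subgradient (gcost A h (nf i)) (x t i) (d t i)) ->
  (* known facts: x(t+1) = M(t) x(t) - alpha(t) d(t), M(t) row-stochastic *)
  (forall t, row_stochastic (M t)) ->
  (forall t i, x t.+1 i = \sum_j M t i j * x t j - alpha t * d t i) ->
  0 < beta -> beta < 1 ->
  (forall t, exists E' : {set 'I_n * 'I_n},
      reducedb G f (faulty_set n phi) E' /\
      forall i j, beta * (if (i == j) || ((nf j, nf i) \in E') then 1 else 0)
                  <= M t i j) ->
  let nu := (num_reduced G f (faulty_set n phi) * (n - phi))%N in
  let gamma := 1 - beta ^+ nu in
  (forall r i j, (fun s => Phi M r s i j) @ \oo --> pi r j) ->
  (forall r, (forall j, 0 <= pi r j) /\ \sum_j pi r j = 1) ->
  (forall r t i j, (r <= t)%N ->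
      `|Phi M r (t - r).+1 i j - pi r j| <= gamma ^+ ceil_div (t - r).+1 nu) ->
  is_max_of (fun i => x 0%N i) U -> is_min_of (fun i => x 0%N i) u ->
  let y := fun t : nat => \sum_j pi 0%N j * x 0%N j
       - \sum_(1 <= r < t.+1) alpha r.-1 * \sum_j pi r j * d r.-1 j in
  forall (i : 'I_(n - phi)) (t : nat), (1 <= t)%N ->
  `|y t - x t i| <=
     (n - phi)%:R * Num.max `|u| `|U| * gamma ^+ ceil_div t nu
     + (n - phi)%:R * L * \sum_(1 <= r < t) alpha r.-1 * gamma ^+ ceil_div (t - r) nu
     + 2 * alpha t.-1 * L.
Proof.
move=> Hirr Hpf Hpn HA Hadm HC1 Ha0 Hadec Hdiv Hcvg Hsg HMs Hrec Hb0 Hb1 HE nu gamma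
  Hpilim Hpi Hrate Hmax Hmin y i t Ht.
case: t Ht => [//|s] _ /=.
have dB : forall t j, `|d t j| <= L := fun t j => @d_bound _ _ _ _ _ _ _ _ _ HA Hadm (Hsg t j).
have L0 : 0 <= L by apply: le_trans (dB 0%N i).
set K := Num.max `|u| `|U|.
have xK : forall j, `|x 0%N j| <= K.
  move=> j; case: Hmax => /(_ j) xU _; case: Hmin => /(_ j) xu _.
  have k1 : `|u| <= K by rewrite le_max lexx.
  have k2 : `|U| <= K by rewrite le_max lexx orbT.
  have n1 : U <= `|U| := ler_norm U.
  have n2 : - u <= `|u| by rewrite -normrN ler_norm.
  rewrite ler_norml; apply/andP; split; lra.
rewrite /y (@unroll _ _ _ _ _ _ Hrec s.+1 i).
rewrite !(big_nat_recr s.+1) // subnn id_sum (_ : s.+1.-1 = s) //.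
set P0 := Phi M 0 s.+1 => /=.
set S0 := \sum_j pi 0%N j * x 0%N j.
set Sy := \sum_(1 <= r < s.+1) alpha r.-1 * \sum_j pi r j * d r.-1 j.
set Sx := \sum_(1 <= r < s.+1) alpha r.-1 * \sum_j Phi M r (s.+1 - r) i j * d r.-1 j.
set Sp := \sum_j P0 i j * x 0%N j.
set T1 := \sum_j (pi 0%N j - P0 i j) * x 0%N j.
set T2 := \sum_(1 <= r < s.+1) alpha r.-1 *
    \sum_j (pi r j - Phi M r (s.+1 - r) i j) * d r.-1 j.
set T3 := alpha s * (\sum_j pi s.+1 j * d s j - d s i).
have e1 : T1 = S0 - Sp by rewrite /T1 -sumrB; apply: eq_bigr => j _; rewrite mulrBl.
have e2 : T2 = Sy - Sx.
  rewrite /T2 -sumrB; apply: eq_bigr => r _; rewrite -mulrBr -sumrB.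
  by congr (_ * _); apply: eq_bigr => j _; rewrite mulrBl.
have -> : S0 - (Sy + alpha s * \sum_j pi s.+1 j * d s j) - (Sp - (Sx + alpha s * d s i))
   = T1 - T2 - T3 by rewrite e1 e2 /T3; ring.
have b1 : `|T1| <= (n - phi)%:R * K * gamma ^+ ceil_div s.+1 nu.
  apply: le_trans (ler_norm_sum _ _ _) _.
  apply: (@le_trans _ _ (\sum_(j < n - phi) gamma ^+ ceil_div s.+1 nu * K)).
    apply: ler_sum => j _; rewrite normrM.
    have := Hrate 0%N s i j (leq0n s); rewrite subn0 -/P0 distrC => hr.
    by apply: ler_pM => //; apply: xK.
  by rewrite sumr_const card_ord -mulrA mulr_natl (mulrC K).
have b2 : `|T2| <= (n - phi)%:R * L *
    \sum_(1 <= r < s.+1) alpha r.-1 * gamma ^+ ceil_div (s.+1 - r) nu.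
  apply: le_trans (ler_norm_sum _ _ _) _.
  rewrite mulr_sumr; apply: ler_sum_nat => r /andP[r1 rs].
  rewrite normrM ger0_norm // mulrCA; apply: ler_wpM2l => //.
  apply: le_trans (ler_norm_sum _ _ _) _.
  apply: (@le_trans _ _ (\sum_(j < n - phi) gamma ^+ ceil_div (s.+1 - r) nu * L)).
    apply: ler_sum => j _; rewrite normrM.
    have := Hrate r s i j (ltnSE rs); rewrite -subSn ?(ltnSE rs) // distrC => hr.
    by apply: ler_pM.
  by rewrite sumr_const card_ord -mulrA mulr_natl (mulrC L).
have b3 : `|T3| <= 2 * alpha s * L.
  rewrite /T3 normrM ger0_norm // (mulrC 2) -mulrA; apply: ler_wpM2l => //.
  apply: le_trans (ler_normB _ _) _.
  have : `|\sum_j pi s.+1 j * d s j| <= L.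
    apply: le_trans (ler_norm_sum _ _ _) _.
    apply: (@le_trans _ _ (\sum_j pi s.+1 j * L)).
      apply: ler_sum => j _; rewrite normrM ger0_norm; last by case: (Hpi s.+1).
      by apply: ler_wpM2l => //; case: (Hpi s.+1).
    by rewrite -mulr_suml; case: (Hpi s.+1) => _ ->; rewrite mul1r.
  move=> H; apply: le_trans (lerD H (dB s i)) _.
  by rewrite mulrDl mul1r.
apply: le_trans (ler_normB _ _) _; apply: lerD b3.
by apply: le_trans (ler_normB _ _) _; apply: lerD.
Qed.
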